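(* Let $\mathcal C,\mathcal C^0,\mathcal C_\gamma$ be as defined in the context. Then $\mathcal C\subset\mathcal C^0$ and $\mathcal C\subset\mathcal C_\gamma$ for all $\gamma\geq0$. Moreover, if $G\in\mathcal C^0\setminus\mathcal C$, then there is $\gamma_*(G)>0$ such that $G\in\mathcal C_\gamma$ for all $\gamma\in[0,\gamma_*(G))$.
   Context: $\mathcal{G}$ is the set of finite, simple, connected, undirected, edge-weighted graphs $G=(V,E,\omega)$ with $V=\{1,\dots,n\}$, $n\geq2$, weights $\omega_{ij}=\omega_{ji}>0$ on edges, $0$ otherwise. $d_i=\sum_j\omega_{ij}$. Fixed $r\in[0,1]$: for $u:V\to\mathbb R$, $(\Delta u)_i=d_i^{-r}\sum_j\omega_{ij}(u_i-u_j)$, $\mathcal M(u)=\sum_id_i^ru_i$, $\mathrm{vol}(V)=\sum_id_i^r$, $\mathcal A(u)=\frac{\mathcal M(u)}{\mathrm{vol}(V)}\chi_V$. Equilibrium measure $\nu^S$ ($S\subsetneq V$): unique $\nu:V\to\mathbb R$ with $(\Delta\nu)_i=1$ on $S$, $\nu=0$ off $S$. $f^j:=\nu^{V\setminus\{j\}}-\mathcal A(\nu^{V\setminus\{j\}})$. $\mathcal C=\{G\in\mathcal G:\forall j\in V\ \forall i\in V\setminus\{j\}:\ f^j_i\geq0\}$; $\mathcal C^0=\{G\in\mathcal G:\forall j\ \forall i\neq j:\ \omega_{ij}>0\text{ or }f^j_i\geq0\}$; for $\gamma>0$, $\mathcal C_\gamma=\{G\in\mathcal C^0:\forall j\ \forall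 i\neq j:\ \omega_{ij}=0\text{ or }d_i^{-r}\omega_{ij}+\gamma\frac{d_j^r}{\mathrm{vol}(V)}f^j_i>0\}$; $\mathcal C_0:=\mathcal G$. *)

(* Defs.v *)
From HB Require Import structures.
From mathcomp Require Import all_boot all_order all_algebra.
From mathcomp Require Import all_classical all_reals.
From mathcomp Require Import exp.
Set Implicit Arguments. Unset Strict Implicit. Unset Printing Implicit Defensive.
Import Order.TTheory GRing.Theory Num.Theory.
Local Open Scope ring_scope.

Section Graphs.
Variable R : realType.
Variable n : nat.
Implicit Types (w : 'I_n -> 'I_n -> R) (u : 'I_n -> R) (r : R).

Definition edge w : rel 'I_n := fun i j => 0 < w i j.

Definition is_graph w : Prop :=
  [/\ (2 <= n)%N,
      (forall i j, w i j = w j i),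
      (forall i j, 0 <= w i j),
      (forall i, w i i = 0)
    & (forall i j, connect (edge w) i j)].

Definition deg w i : R := \sum_(j < n) w i j.

Definition degr r w i : R := powR (deg w i) r.

Definition lap r w u i : R := (degr r w i)^-1 * \sum_(j < n) w i j * (u i - u j).

Definition mass r w u : R := \sum_(i < n) degr r w i * u i.
Definition vol r w : R := \sum_(i < n) degr r w i.

(* A(u) is the constant function with value M(u)/vol(V) *)
Definition avg r w u : R := mass r w u / vol r w.

Definition is_equilibrium r w (S : {set 'I_n}) (nu : 'I_n -> R) : Prop :=
  (forall i, i \in S -> lap r w nu i = 1) /\ (forall i, i \notin S -> nu i = 0).

Definition fj r w (nu : 'I_n -> R) i : R := nu i - avg r w nu.

Definition inC r w : Prop :=
  forall j nu, is_equilibrium r w [set~ j] nu ->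
    forall i, i != j -> 0 <= fj r w nu i.

Definition inC0 r w : Prop :=
  forall j nu, is_equilibrium r w [set~ j] nu ->
    forall i, i != j -> 0 < w i j \/ 0 <= fj r w nu i.

Definition inCpos r w (g : R) : Prop :=
  inC0 r w /\
  forall j nu, is_equilibrium r w [set~ j] nu ->
    forall i, i != j ->
      w i j = 0 \/
      0 < (degr r w i)^-1 * w i j + g * (degr r w j / vol r w) * fj r w nu i.

(* C_gamma for gamma >= 0, with C_0 := \mathcal G *)
Definition inCgamma r w (g : R) : Prop := g = 0 \/ (0 < g /\ inCpos r w g).

End Graphs.

(* Main.v *)
Require Import Defs.
From HB Require Import structures.
From mathcomp Require Import all_boot all_order all_algebra.
From mathcomp Require Import all_classical all_reals.
From mathcomp Require Import exp ring lra.
Import Order.TTheory GRing.Theory Num.Theory.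
Local Open Scope ring_scope.

Lemma path_closed (T : finType) (e : rel T) (P : T -> Prop) :
  (forall a b, e a b -> P a -> P b) ->
  forall p x, path e x p -> P x -> P (last x p).
Proof.
move=> hc; elim=> //= y p IH x /andP[exy hp] Px; apply: IH => //.
exact: hc exy Px.
Qed.

Lemma equil_le {R : realType} {n : nat} (r : R) (w : 'I_n -> 'I_n -> R) j nu1 nu2 :
  is_graph w -> is_equilibrium r w [set~ j] nu1 ->
  is_equilibrium r w [set~ j] nu2 -> forall k, nu1 k <= nu2 k.
Proof.
move=> [hn hsym hge0 hdiag hconn] [h1a h1b] [h2a h2b].
pose u k := nu1 k - nu2 k.
have harm : forall k, k != j -> \sum_(l < n) w k l * (u k - u l) = 0.
  move=> k hk.
  have hk' : k \in [set~ j] by rewrite in_setC1.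
  have e1 := h1a k hk'; have e2 := h2a k hk'.
  rewrite /lap in e1 e2.
  have hd : (degr r w k)^-1 != 0.
    apply/eqP => h0; move: e1; rewrite h0 mul0r => /eqP; by rewrite eq_sym oner_eq0.
  have := e1; rewrite -{}e2 => /(mulfI hd) e.
  have -> : \sum_(l < n) w k l * (u k - u l) =
     \sum_(l < n) w k l * (nu1 k - nu1 l) - \sum_(l < n) w k l * (nu2 k - nu2 l).
    rewrite -sumrB; apply: eq_bigr => l _; rewrite /u; ring.
  by rewrite e subrr.
have uj : u j = 0.
  have hj : j \notin [set~ j] by rewrite in_setC1 eqxx.
  by rewrite /u h1b // h2b // subrr.
have [k0 _ hk0] := @arg_maxP _ _ 'I_n j xpredT u isT.
move=> k; rewrite -subr_le0.
apply: (le_trans (hk0 k isT)).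
rewrite leNgt; apply/negP => hpos.
have closed : forall a b, edge w a b -> u a = u k0 -> u b = u k0.
  move=> a b hab ha.
  have haj : a != j by apply/eqP => haj; move: hpos; rewrite -ha haj uj ltxx.
  have hs := harm a haj.
  have hnn : forall l, true -> 0 <= w a l * (u a - u l).
    move=> l _; apply: mulr_ge0 => //; rewrite ha subr_ge0; exact: hk0.
  have /eqP := psumr_eq0P hnn hs isT (i:=b).
  rewrite mulf_eq0 => /orP[/eqP hw|].
    by move: hab; rewrite /edge hw ltxx.
  rewrite subr_eq0 => /eqP <-; exact: ha.
have := hconn k0 j => /connectP[p hp hl].
have := @path_closed _ (edge w) (fun x => u x = u k0) closed p k0 hp erefl.
rewrite -hl uj => h0; by move: hpos; rewrite -h0 ltxx.
Qed.

Lemma equil_eq {R : realType} {n : nat} (r : R) (w : 'I_n -> 'I_n -> R) j nu1 nu2 :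
  is_graph w -> is_equilibrium r w [set~ j] nu1 ->
  is_equilibrium r w [set~ j] nu2 -> nu1 = nu2.
Proof.
move=> hg h1 h2; apply/funext => k; apply/le_anti/andP; split.
  exact: (equil_le _ _ _ _ _ hg h1 h2 k).
exact: (equil_le _ _ _ _ _ hg h2 h1 k).
Qed.

Lemma degr_pos {R : realType} {n : nat} (r : R) (w : 'I_n -> 'I_n -> R) i j :
  is_graph w -> 0 < w i j -> 0 < degr r w i.
Proof.
move=> [hn hsym hge0 hdiag hconn] hw; apply: powR_gt0.
rewrite /deg (bigD1 j) //=; apply: (lt_le_trans hw); rewrite lerDl.
by apply: sumr_ge0 => l _.
Qed.

Lemma vol_ge0 (R : realType) (n : nat) (r : R) (w : 'I_n -> 'I_n -> R) :
  0 <= vol r w.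
Proof. by apply: sumr_ge0 => l _; apply: powR_ge0. Qed.

Definition Cond {R : realType} {n : nat} (r : R) (w : 'I_n -> 'I_n -> R) g j i :=
  forall nu, is_equilibrium r w [set~ j] nu -> i != j ->
      w i j = 0 \/
      0 < (degr r w i)^-1 * w i j + g * (degr r w j / vol r w) * fj r w nu i.

Lemma pair_bound {R : realType} {n : nat} (r : R) (w : 'I_n -> 'I_n -> R) j i :
  is_graph w -> exists b, 0 < b /\ forall g, 0 < g < b -> Cond r w g j i.
Proof.
move=> hg; have hge0 : forall a b, 0 <= w a b by case: hg.
have [hw|hw] := eqVneq (w i j) 0.
  by exists 1; split => // g _ nu _ _; left.
have hwp : 0 < w i j by rewrite lt_neqAle eq_sym hw hge0.
have [[nu0 h0]|hno] := boolp.pselect (exists nu, is_equilibrium r w [set~ j] nu);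
  last first.
  exists 1; split => // g _ nu hnu; exfalso; apply: hno; by exists nu.
set A := (degr r w i)^-1 * w i j.
set C := degr r w j / vol r w.
set F := fj r w nu0 i.
have hA : 0 < A by rewrite /A mulr_gt0 // invr_gt0; exact: degr_pos hg hwp.
have hC : 0 <= C by rewrite /C divr_ge0 ?powR_ge0 ?vol_ge0.
have hD : 0 < 1 + C * `|F| by rewrite ltr_pwDl // mulr_ge0.
exists (A / (1 + C * `|F|)); split; first by rewrite divr_gt0.
move=> g /andP[g0 gb] nu hnu _; right.
rewrite (equil_eq _ _ _ _ _ hg hnu h0) -/A -/C -/F.
move: gb; rewrite ltr_pdivlMr // => gb.
have hP : 0 <= g * C by rewrite mulr_ge0 // ltW.
have hF : 0 <= g * C * (F + `|F|).
  apply: mulr_ge0 => //; rewrite -lerBlDr sub0r; exact: lerNnormlW.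
nra.
Qed.

Lemma seq_bound {R : realType} {n : nat} (r : R) (w : 'I_n -> 'I_n -> R) :
  is_graph w -> forall s : seq ('I_n * 'I_n),
  exists gs, 0 < gs /\ forall p, p \in s -> forall g, 0 < g < gs -> Cond r w g p.1 p.2.
Proof.
move=> hg; elim=> [|p s [gs [hgs IH]]]; first by exists 1.
have [b [hb Hb]] := pair_bound r w p.1 p.2 hg.
exists (Order.min gs b); split; first by rewrite lt_min hgs hb.
move=> q; rewrite in_cons => /orP[/eqP -> | hq] g; rewrite lt_min => /and3P[g0 g1 g2].
  by apply: Hb; rewrite g0 g2.
by apply: IH => //; rewrite g0 g1.
Qed.

Theorem lemma6p3 (R : realType) (n : nat) (r : R) (w : 'I_n -> 'I_n -> R) :
  0 <= r <= 1 -> is_graph w ->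
  [/\ (inC r w -> inC0 r w),
      (forall g : R, 0 <= g -> inC r w -> inCgamma r w g)
    & (inC0 r w -> ~ inC r w ->
       exists gs : R, 0 < gs /\ (forall g : R, 0 <= g < gs -> inCgamma r w g))].
Proof.
move=> _ hg.
have hge0 : forall a b, 0 <= w a b by case: hg.
have p1 : inC r w -> inC0 r w by move=> hC j nu h i hij; right; exact: hC j nu h i hij.
split => //.
  move=> g g0 hC; have [->|gp] := eqVneq g 0; first by left.
  have gpos : 0 < g by rewrite lt_neqAle eq_sym gp g0.
  right; split => //; split; first exact: p1.
  move=> j nu h i hij; have [hw|hw] := eqVneq (w i j) 0; first by left.
  have hwp : 0 < w i j by rewrite lt_neqAle eq_sym hw hge0.
  right.
  have a1 : 0 <= g * (degr r w j / vol r w) * fj r w nu i.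
    apply: mulr_ge0; last exact: hC j nu h i hij.
    by rewrite mulr_ge0 ?(ltW gpos) // divr_ge0 ?powR_ge0 ?vol_ge0.
  have a2 : 0 < (degr r w i)^-1 * w i j.
    by rewrite mulr_gt0 // invr_gt0; exact: degr_pos hg hwp.
  lra.
move=> h0 _.
have [gs [hgs H]] := seq_bound r w hg (enum {: 'I_n * 'I_n}).
exists gs; split => // g /andP[g0 g1].
have [->|gp] := eqVneq g 0; first by left.
have gpos : 0 < g by rewrite lt_neqAle eq_sym gp g0.
right; split => //; split => // j nu h i hij.
have := H (j, i); rewrite mem_enum => /(_ isT g); rewrite gpos g1 => /(_ isT).
by move=> /(_ nu h hij).
Qed.
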